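(* Let $K\ge1$, $\delta\in(0,1)$, parameters $\theta_i\in\Theta_i$ for $i\in[K]$, and data $\mathbf X=(X_1,\dots,X_K)$ with arbitrary dependence. For each $i$ let $(E_i(\theta))_{\theta\in\Theta_i}$ be a family of e-values ($E_i(\theta)\ge0$, $\mathbb{E}[E_i(\theta)]\le1$ whenever $\theta$ is the true value of $\theta_i$) with associated e-CIs $C_i(\alpha)=\{\theta\in\Theta_i:E_i(\theta)<1/\alpha\}$. Let $w_1,\dots,w_K\ge0$ be fixed weights with $\sum_{i=1}^K w_i\le K$, let $S=\mathcal S(\mathbf X)$ for an arbitrary selection rule $\mathcal S$, and for each $i\in S$ report $C_i(w_i\delta|S|/K)$. Then $$\mathrm{FCR}=\mathbb{E}\left[\frac{\sum_{i\in S}\mathbf 1\{\theta_i\notin C_i(w_i\delta|S|/K)\}}{|S|\vee1}\right]\le\delta.$$ *)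

(* Defs.v *)
From HB Require Import structures.
From mathcomp Require Import all_boot all_order all_algebra.
From mathcomp Require Import all_classical all_reals all_analysis.
Set Implicit Arguments. Unset Strict Implicit. Unset Printing Implicit Defensive.
Import Order.TTheory GRing.Theory Num.Theory.
Local Open Scope classical_set_scope.
Local Open Scope ring_scope.

(* e-confidence interval C(alpha) = {theta | E(theta) < 1/alpha}, with the
   convention 1/0 = +oo, i.e. C(0) is the whole parameter space. *)
Definition e_CI (R : realType) (Theta : Type) (Eth : Theta -> R) (alpha : R)
  : set Theta := [set th | alpha = 0 \/ Eth th < alpha^-1].

Definition miscover (R : realType) (T : Type) (K : nat) (Theta : 'I_K -> Type)
  (theta : forall i, Theta i) (E : forall i, Theta i -> T -> R)
  (w : 'I_K -> R) (delta : R) (S : T -> {set 'I_K}) (omega : T) (i : 'I_K) : R :=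
  \1_(~` e_CI (fun th => E i th omega)
          (w i * delta * (#|S omega|)%:R / K%:R)) (theta i).

Definition FCR (R : realType) (d : measure_display) (T : measurableType d)
  (P : probability T R) (K : nat) (Theta : 'I_K -> Type)
  (theta : forall i, Theta i) (E : forall i, Theta i -> T -> R)
  (w : 'I_K -> R) (delta : R) (S : T -> {set 'I_K}) : \bar R :=
  (\int[P]_omega
     ((\sum_(i in S omega) miscover theta E w delta S omega i)
        / (maxn #|S omega| 1)%:R)%:E)%E.

(* Main.v *)
Require Import Defs.
From HB Require Import structures.
From mathcomp Require Import all_boot all_order all_algebra.
From mathcomp Require Import all_classical all_reals all_analysis.
From mathcomp Require Import ring.
Import Order.TTheory GRing.Theory Num.Theory.
Local Open Scope classical_set_scope.
Local Open Scope ring_scope.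

Lemma le_int_nm (R : realType) (d : measure_display) (T : measurableType d)
  (mu : {measure set T -> \bar R}) (f g : T -> \bar R) :
  (forall x, (0 <= f x)%E) -> (forall x, (f x <= g x)%E) ->
  (\int[mu]_x f x <= \int[mu]_x g x)%E.
Proof.
move=> f0 fg.
have g0 x : (0 <= g x)%E by apply: le_trans (f0 x) (fg x).
rewrite !ge0_integralTE //.
apply: le_ereal_sup => _ [h hf <-]; exists h => // x.
exact: le_trans (hf x) (fg x).
Qed.

Lemma mis_le (R : realType) (T : Type) (K : nat) (Theta : 'I_K -> Type)
  (theta : forall i, Theta i) (E : forall i, Theta i -> T -> R)
  (w : 'I_K -> R) (delta : R) (S : T -> {set 'I_K}) (omega : T) (i : 'I_K) :
  0 <= w i * delta * (#|S omega|)%:R / K%:R -> 0 <= E i (theta i) omega ->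
  miscover theta E w delta S omega i <=
    w i * delta * (#|S omega|)%:R / K%:R * E i (theta i) omega.
Proof.
set a := _ / _; move=> a0 e0.
rewrite /miscover indicE.
case: (boolP (theta i \in _)) => h; last by rewrite mulr_ge0.
move: h; rewrite inE /e_CI /= => /not_orP [an0 /negP]; rewrite -leNgt => ea.
have ap : 0 < a by rewrite lt_def a0 andbT; apply/eqP.
rewrite -(mulfV (lt0r_neq0 ap)); exact: ler_wpM2l.
Qed.

Theorem theorem5 (R : realType) (d : measure_display) (T : measurableType d)
  (P : probability T R) (K : nat) (hK : (1 <= K)%N)
  (delta : R) (hdelta : 0 < delta < 1)
  (Theta : 'I_K -> Type) (theta : forall i, Theta i)
  (E : forall i, Theta i -> T -> R)
  (hEmeas : forall i (th : Theta i), measurable_fun setT (E i th))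
  (hEnn : forall i (th : Theta i) (omega : T), 0 <= E i th omega)
  (hEexp : forall i, (\int[P]_omega (E i (theta i) omega)%:E <= 1)%E)
  (w : 'I_K -> R) (hw : forall i, 0 <= w i)
  (hwsum : \sum_(i < K) w i <= K%:R)
  (S : T -> {set 'I_K})
  (hSmeas : forall A : {set 'I_K}, measurable [set omega | S omega = A]) :
  (FCR P theta E w delta S <= delta%:E)%E.
Proof.
case/andP: hdelta => d0 d1.
have K0 : (0 : R) < K%:R by rewrite ltr0n.
have c0 i : 0 <= delta * w i / K%:R by rewrite divr_ge0 ?ler0n // mulr_ge0 // ltW.
have mis0 (om : T) (i : 'I_K) : (0 : R) <= miscover theta E w delta S om i.
  by rewrite /miscover indicE ler0n.
rewrite /FCR.
apply: (le_trans (@le_int_nm _ _ _ _ _ (fun om =>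
   (\sum_(i < K) (delta * w i / K%:R)%:E * (E i (theta i) om)%:E)%E) _ _)).
- move=> om; rewrite lee_fin divr_ge0 ?sumr_ge0 //.
- move=> om; rewrite -(eq_bigr _ (fun i _ => EFinM _ _)) sumEFin lee_fin.
  have g0 : 0 <= \sum_(i < K) delta * w i / K%:R * E i (theta i) om.
    by apply: sumr_ge0 => i _; rewrite mulr_ge0.
  have [s0|sp] := posnP #|S om|.
    rewrite (eq_bigl (fun _ => false)) ?big_pred0_eq ?mul0r //.
    by move=> i; move/eqP: s0; rewrite cards_eq0 => /eqP ->; rewrite inE.
  have -> : maxn #|S om| 1 = #|S om| by apply/maxn_idPl.
  have sR : (0 : R) < #|S om|%:R by rewrite ltr0n.
  rewrite ler_pdivrMr //.
  have hm : \sum_(i in S om) miscover theta E w delta S om i <=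
     \sum_(i in S om) (w i * delta * (#|S om|)%:R / K%:R * E i (theta i) om).
    apply: ler_sum => i _; apply: mis_le => //.
    by rewrite divr_ge0 ?ler0n // !mulr_ge0 ?ler0n // ltW.
  apply: (le_trans hm).
  rewrite mulr_suml [X in _ <= X](bigID (fun i => i \in S om)) /=.
  rewrite -[leLHS]addr0; apply: lerD; last first.
    by apply: sumr_ge0 => i _; rewrite !mulr_ge0 ?ler0n ?invr_ge0 // ltW.
  apply: ler_sum => i _; rewrite le_eqVlt; apply/orP; left; apply/eqP.
  by ring.
rewrite ge0_integral_sum //; last first.
  by move=> i om _; rewrite mule_ge0 ?lee_fin.
  by move=> i; apply: measurable_funeM; exact/measurable_realfun.measurable_EFinP/hEmeas.
apply: (@le_trans _ _ (\sum_(i < K) (delta * w i / K%:R)%:E)%E).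
  apply: lee_sum => i _; rewrite ge0_integralZl_EFin //; last first.
    exact/measurable_realfun.measurable_EFinP/hEmeas.
    by move=> om _; rewrite lee_fin.
  by rewrite -[X in (_ <= X)%E]mule1; apply: lee_wpmul2l; rewrite ?lee_fin.
rewrite sumEFin lee_fin -mulr_suml -mulr_sumr -mulrA.
by rewrite -[leRHS]mulr1 ler_pM2l // ler_pdivrMr // mul1r.
Qed.
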